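(* Let $\Theta$ be a convex overmarked box and $(\varepsilon,\delta)\in\mathbb{R}^2$. Then the convex interior of $\sigma_{(\varepsilon,\delta)}(\Theta)$ is contained in the convex interior of $\Theta$ if and only if $(\varepsilon,\delta)\in\mathcal{R}$.
   Context: Let $V$ be a 3-dimensional real vector space. An overmarked box is $\Theta=((p,q,r,s;t,b),(P,Q,R,S;T,B))$ with $p,\dots,b\in\mathbf{P}(V)$ and lines $P,\dots,B$ of $\mathbf{P}(V)$ such that $P=ts$, $Q=tr$, $R=bq$, $S=bp$, $T=pq$, $B=rs$ (here $xy$ is the line through $x,y$) and $T\cap B\notin\{p,q,r,s,t,b\}$. A $\Theta$-basis is a basis of $V$, unique up to scaling, in which $p=[-1:1:0]$, $q=[1:1:0]$, $r=[1:0:1]$, $s=[-1:0:1]$; then $t=[\zeta_t:1:0]$ and $b=[\zeta_b:0:1]$; $\Theta$ is convex iff $\zeta_t,\zeta_b\in\,]-1,1[$. The convex interior of a convex $\Theta$ is the interior of the convex quadrilateral with vertices $p,q,r,s$ (in this cyclic order) whose sides $[pq]\ni t$ and $[rs]\ni b$; in $\Theta$-basis coordinates it is $\{[x:y:z]: y+z\ne0,\ |x|<|y+z|,\ |y-z|<|y+z|\}$. For $(\varepsilon,\delta)\in\mathbb{R}^2$ let $$\Sigma_{(\varepsilon,\delta)}=\begin{pmatrix}1&0&0\\0&e^{-\delta}\cosh\varepsilon&-\sinh\varepsilon\\0&-\sinh\varepsilon&e^{\delta}\cosh\varepsilon\end{pmatrix},$$ and $\sigma_{(\varepsilon,\delta)}(\Theta)$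 the image of $\Theta$ under the projective transformation with matrix $\Sigma_{(\varepsilon,\delta)}$ in a $\Theta$-basis (its convex interior is the image of that of $\Theta$). Let $f(\varepsilon,\delta)=e^{-\delta}\cosh\varepsilon-\sinh\varepsilon-1$ and $\mathcal{R}=\{(\varepsilon,\delta)\in\mathbb{R}^2:f(\varepsilon,\delta)\ge0,\ f(\varepsilon,-\delta)\ge0\}$. *)

(* Defs.v *)
From Stdlib Require Import Reals.
Open Scope R_scope.

(* Homogeneous coordinates [x:y:z] of a point of P(V), in a Theta-basis. *)
Definition vec3 := (R * R * R)%type.

(* An overmarked box, up to the choice of a Theta-basis, is determined by the
   coordinates zeta_t, zeta_b with t = [zeta_t:1:0], b = [zeta_b:0:1]
   (p=[-1:1:0], q=[1:1:0], r=[1:0:1], s=[-1:0:1]). *)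
Record omb := OMB { zeta_t : R; zeta_b : R }.

Definition omb_convex (Th : omb) : Prop :=
  -1 < zeta_t Th < 1 /\ -1 < zeta_b Th < 1.

(* Membership of [x:y:z] (Theta-basis coordinates) in the convex interior of
   a convex overmarked box Theta (this set is invariant under scaling). *)
Definition convex_interior (Th : omb) (v : vec3) : Prop :=
  let '(x, y, z) := v in
  y + z <> 0 /\ Rabs x < Rabs (y + z) /\ Rabs (y - z) < Rabs (y + z).

Definition Sigma (eps del : R) (v : vec3) : vec3 :=
  let '(x, y, z) := v in
  (x,
   exp (- del) * cosh eps * y - sinh eps * z,
   - sinh eps * y + exp del * cosh eps * z).

Definition convex_interior_sigma (eps del : R) (Th : omb) (w : vec3) : Prop :=
  exists v, v <> (0, 0, 0) /\ convex_interior Th v /\ w = Sigma eps del v.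

Definition f_R (eps del : R) : R := exp (- del) * cosh eps - sinh eps - 1.

Definition region_R (eps del : R) : Prop :=
  f_R eps del >= 0 /\ f_R eps (- del) >= 0.

(* Main.v *)
Require Import Defs.
From Stdlib Require Import Reals Lra Psatz.
Open Scope R_scope.

Lemma absyz (y z : R) : Rabs (y - z) < Rabs (y + z) <-> y*z > 0.
Proof. split; intro H; split_Rabs; nra. Qed.

Lemma expinv (x : R) : exp x * exp (- x) = 1.
Proof. rewrite <- exp_plus. replace (x + - x) with 0 by ring. apply exp_0. Qed.

Lemma key_facts (eps del : R) :
  let A := exp (- del) * cosh eps in
  let B := exp del * cosh eps in
  let S := sinh eps in
  0 < A /\ 0 < B /\ A * B = 1 + S * S.
Proof.
  intros A B S. unfold A, B, S, cosh, sinh.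
  pose proof (exp_pos eps). pose proof (exp_pos (-eps)).
  pose proof (exp_pos del). pose proof (exp_pos (-del)).
  pose proof (expinv eps). pose proof (expinv del).
  split; [|split]; nra.
Qed.

Theorem proposition7p4 (Th : omb) (eps del : R) :
  omb_convex Th ->
  ((forall w : vec3, convex_interior_sigma eps del Th w -> convex_interior Th w)
   <-> region_R eps del).
Proof.
  intros _.
  destruct (key_facts eps del) as (HA & HB & HAB).
  set (A := exp (- del) * cosh eps) in *.
  set (B := exp del * cosh eps) in *.
  set (S := sinh eps) in *.
  assert (EA : f_R eps del = A - S - 1) by (unfold f_R; reflexivity).
  assert (EB : f_R eps (- del) = B - S - 1)
    by (unfold f_R, B; rewrite Ropp_involutive; reflexivity).
  unfold region_R; rewrite EA, EB.
  split.
  - intro Hinc.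
    destruct (Rle_lt_dec S 0) as [HS | HS].
    + destruct (Rlt_le_dec (A - S) 1) as [HaS | HaS].
      * exfalso.
        set (eta := (1 - (A - S)) / (2 * (Rabs (B - S - 1) + 1))).
        assert (Heta : 0 < eta).
        { unfold eta. apply Rdiv_lt_0_compat; [lra|].
          pose proof (Rabs_pos (B - S - 1)); lra. }
        assert (Heta2 : eta * (B - S - 1) < 1 - (A - S)).
        { assert (eta * (Rabs (B - S - 1) + 1) = (1 - (A - S)) / 2).
          { unfold eta. field. pose proof (Rabs_pos (B - S - 1)); lra. }
          pose proof (Rle_abs (B - S - 1)). nra. }
        set (t := A - S + eta * (B - S)).
        specialize (Hinc (Sigma eps del (t, 1, eta))).
        assert (Hc : convex_interior Th (Sigma eps del (t, 1, eta))).
        { apply Hinc. exists (t, 1, eta). split; [|split; [|reflexivity]].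
          - intro E; inversion E; lra.
          - unfold convex_interior. split; [lra|split].
            + unfold t. rewrite (Rabs_right (1 + eta)) by lra.
              split_Rabs; nra.
            + apply absyz. nra. }
        unfold Sigma, convex_interior in Hc. fold A B S in Hc.
        destruct Hc as (_ & Hc & _).
        assert (E : A * 1 - S * eta + (- S * 1 + B * eta) = t) by (unfold t; ring).
        rewrite E in Hc. lra.
      * destruct (Rlt_le_dec (B - S) 1) as [HbS | HbS]; [|lra].
        exfalso.
        set (eta := (1 - (B - S)) / (2 * (Rabs (A - S - 1) + 1))).
        assert (Heta : 0 < eta).
        { unfold eta. apply Rdiv_lt_0_compat; [lra|].
          pose proof (Rabs_pos (A - S - 1)); lra. }
        assert (Heta2 : eta * (A - S - 1) < 1 - (B - S)).
        { assert (eta * (Rabs (A - S - 1) + 1) = (1 - (B - S)) / 2).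
          { unfold eta. field. pose proof (Rabs_pos (A - S - 1)); lra. }
          pose proof (Rle_abs (A - S - 1)). nra. }
        set (t := B - S + eta * (A - S)).
        specialize (Hinc (Sigma eps del (t, eta, 1))).
        assert (Hc : convex_interior Th (Sigma eps del (t, eta, 1))).
        { apply Hinc. exists (t, eta, 1). split; [|split; [|reflexivity]].
          - intro E; inversion E; lra.
          - unfold convex_interior. split; [lra|split].
            + unfold t. rewrite (Rabs_right (eta + 1)) by lra.
              split_Rabs; nra.
            + apply absyz. nra. }
        unfold Sigma, convex_interior in Hc. fold A B S in Hc.
        destruct Hc as (_ & Hc & _).
        assert (E : A * eta - S * 1 + (- S * eta + B * 1) = t) by (unfold t; ring).
        rewrite E in Hc. lra.
    + exfalso.
      specialize (Hinc (Sigma eps del (0, 1, S / B))).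
      assert (Hc : convex_interior Th (Sigma eps del (0, 1, S / B))).
      { apply Hinc. exists (0, 1, S / B).
        assert (0 < S / B) by (apply Rdiv_lt_0_compat; lra).
        split; [|split; [|reflexivity]].
        - intro E; inversion E; lra.
        - unfold convex_interior. split; [lra|split].
          + rewrite Rabs_R0. apply Rabs_pos_lt. lra.
          + apply absyz. nra. }
      unfold Sigma, convex_interior in Hc. fold A B S in Hc.
      destruct Hc as (_ & _ & Hc). apply absyz in Hc.
      assert (E : - S * 1 + B * (S / B) = 0) by (field; lra).
      rewrite E in Hc. lra.
  - intros [Ha Hb] w [[[x y] z] [Hnz [Hv Hw]]].
    assert (HS : S <= 0).
    { destruct (Rle_lt_dec S 0); [assumption|]. nra. }
    subst w. unfold Sigma, convex_interior in *. fold A B S.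
    destruct Hv as (Hyz0 & Hx & Hyz). apply absyz in Hyz.
    assert (Hsum : Rabs (y + z) <=
      Rabs (A * y - S * z + (- S * y + B * z))).
    { destruct (Rlt_le_dec 0 y).
      - assert (0 < z) by nra. split_Rabs; nra.
      - assert (y < 0) by nra. assert (z < 0) by nra. split_Rabs; nra. }
    assert (Hp : (A * y - S * z) * (- S * y + B * z) > 0).
    { destruct (Rlt_le_dec 0 y).
      - assert (0 < z) by nra.
        assert (0 < A * y - S * z) by nra.
        assert (0 < - S * y + B * z) by nra. nra.
      - assert (y < 0) by nra. assert (z < 0) by nra.
        assert (A * y - S * z < 0) by nra.
        assert (- S * y + B * z < 0) by nra. nra. }
    split; [|split].
    + intro E. nra.
    + lra.
    + apply absyz. exact Hp.
Qed.
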